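(* Let $\{\xi_{pq}:\mathbf A_p\Rightarrow\mathbf A_q: p\preceq q\text{ in }\mathbf I\}$ be a semilattice directed system of metamorphisms of algebras of type $\tau$ (with $\mathbf I$ having a least element if $\tau$ has constants) and let $\mathbf A$ be its Płonka sum. For each $n$-ary symbol $\sigma$ and $0\le i\le n$ define $a\odot^\sigma_i b:=\xi^{\sigma i}_{ps}(a)$ for $a\in A_p$, $b\in A_q$, $s:=p\vee q$. Then $\sigma\mapsto\langle\odot^\sigma_0,\dots,\odot^\sigma_n\rangle$ is a partition system for $\mathbf A$; the classes of the common equivalence $\equiv_\odot$ are exactly the sets $A_p$, with $a\preceq_\odot b$ iff $p\preceq q$ for $a\in A_p,b\in A_q$; and the directed system induced by this partition system (via $\xi'^{\sigma i}_{pq}(a)=a\odot^\sigma_i b$ for any $b\in A_q$) coincides with the given one, i.e. $a\odot^\sigma_i b=\xi^{\sigma i}_{pq}(a)$ for $p\preceq q$, $a\in A_p$, $b\in A_q$.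
   Context: A left normal band on a set $A$ is a binary operation $\odot$ with $a\odot a=a$, $a\odot(b\odot c)=(a\odot b)\odot c$, $a\odot(b\odot c)=a\odot(c\odot b)$. Put $a\preceq_\odot b\iff b\odot a=b$, and $a\equiv_\odot b$ iff $a\preceq_\odot b$ and $b\preceq_\odot a$. Left normal bands $\odot,\otimes$ are homotactic if $\preceq_\odot=\preceq_\otimes$. For an algebra $\mathbf A$ of type $\tau$, a partition system assigns to each $n$-ary symbol $\sigma$ (constants: $n=0$) a tuple $\langle\odot^\sigma_0,\dots,\odot^\sigma_n\rangle$ of pairwise homotactic left normal bands (homotactic across all $\sigma$) such that for all $a_i,b$: if $n\ge1$, $\sigma^{\mathbf A}(a_1,\dots,a_n)\odot^\sigma_0b=\sigma^{\mathbf A}(a_1\odot^\sigma_1b,\dots,a_n\odot^\sigma_nb)$; and $b\odot^\sigma_0\sigma^{\mathbf A}(a_1,\dots,a_n)=b\odot^\sigma_0a_1\odot^\sigma_0\cdots\odot^\sigma_0a_n$ (for constants $\omega$: $b\odot^\omega_0\omega^{\mathbf A}=b$). A metamorphism $f:\mathbf A\Rightarrow\mathbf B$ assigns to each $n$-ary $\sigma$ maps $f^{\sigma0},\dots,f^{\sigma n}:A\to B$ with $f^{\sigma0}(\sigma^{\mathbf A}(a_1,\dots,a_n))=\sigma^{\mathbf B}(f^{\sigma1}(a_1),\dots,f^{\sigma n}(a_n))$; composition is componentwise. A semilattice directed system of metamorphisms over a join-semilattice $\mathbf I=\langle I,\vee\rangle$ (order $\preceq$) is a family of pairwise disjoint algebras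 $\mathbf A_p$ with metamorphisms $\xi_{pq}:\mathbf A_p\Rightarrow\mathbf A_q$ ($p\preceq q$), $\xi_{pp}$ identity, $\xi_{qr}\circ\xi_{pq}=\xi_{pr}$. Its Płonka sum is the algebra on $\biguplus_pA_p$ with $\sigma(a_1,\dots,a_n):=\sigma^{\mathbf A_q}(\xi^{\sigma1}_{p_1q}(a_1),\dots,\xi^{\sigma n}_{p_nq}(a_n))$ for $a_i\in A_{p_i}$, $q=p_1\vee\dots\vee p_n$, and $\omega:=\omega^{\mathbf A_\bot}$ for constants, $\bot$ the least element of $\mathbf I$. *)

(* Defs.v *)
From mathcomp Require Import all_boot all_order.
Import Order.TTheory.
Local Open Scope order_scope.

(* Tuples <.._0,...,.._n> indexed by 'I_(ar s).+1 : index ord0 is component 0,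
   index (lift ord0 k) is component k+1 (for argument k : 'I_(ar s)). *)

Section Bands.
Variable X : Type.
Implicit Types (f g : X -> X -> X).

Definition left_normal_band f :=
  [/\ forall a, f a a = a,
      forall a b c, f a (f b c) = f (f a b) c &
      forall a b c, f a (f b c) = f a (f c b)].

Definition bprec f (a b : X) : Prop := f b a = b.
Definition bequiv f (a b : X) : Prop := bprec f a b /\ bprec f b a.
Definition homotactic f g := forall a b, bprec f a b <-> bprec g a b.
End Bands.

Section PartitionSystem.
Variables (Sym : Type) (ar : Sym -> nat) (X : Type).
Variable opX : forall s, ('I_(ar s) -> X) -> X.
Variable band : forall s, 'I_(ar s).+1 -> X -> X -> X.

Definition partition_system : Prop :=
  [/\ (forall s i, left_normal_band X (band s i)),
      (forall s i t j, homotactic X (band s i) (band t j)),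
      (forall s (a : 'I_(ar s) -> X) (b : X), (0 < ar s)%N ->
          band s ord0 (opX s a) b = opX s (fun k => band s (lift ord0 k) (a k) b)) &
      (forall s (a : 'I_(ar s) -> X) (b : X),
          band s ord0 b (opX s a) = foldl (band s ord0) b [seq a k | k <- enum 'I_(ar s)])].
End PartitionSystem.

Section Plonka.
Variables (d : Order.disp_t) (I : joinSemilatticeType d).

(* join of a finite family of indices; for the empty family, the supplied
   least element (only needed when the family is empty, i.e. for constants) *)
Definition join_idx (n : nat) (ps : 'I_n -> I) (b : n = 0 -> I) : I :=
  match n as m return ('I_m -> I) -> (m = 0 -> I) -> I with
  | 0 => fun _ b => b erefl
  | m.+1 => fun ps _ => foldr (fun i acc => ps i `|` acc) (ps ord0) (enum 'I_m.+1)
  end ps b.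

Lemma join_idx_ub n (ps : 'I_n -> I) b i : ps i <= join_idx n ps b.
Proof.
case: n ps b i => [|m] ps b i; first by case: i.
rewrite /join_idx.
have : i \in enum 'I_m.+1 by rewrite mem_enum.
elim: (enum 'I_m.+1) => [//|j s IH] /=; rewrite in_cons => /orP [/eqP ->|/IH H].
  exact: leUl.
exact: le_trans H (leUr _ _).
Qed.

Variables (Sym : Type) (ar : Sym -> nat).
Variable A : I -> Type.
Variable op : forall p s, ('I_(ar s) -> A p) -> A p.
Variable xi : forall p q, p <= q -> forall s, 'I_(ar s).+1 -> A p -> A q.
Variable hbot : forall s, ar s = 0 -> {b : I | forall p, b <= p}.

Definition plonka_op s (a : 'I_(ar s) -> {p : I & A p}) : {p : I & A p} :=
  let ps := fun k => tag (a k) in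
  let b := fun e => sval (hbot s e) in
  let q := join_idx (ar s) ps b in
  existT A q (op q s (fun k => xi (ps k) q (join_idx_ub (ar s) ps b k)
                               s (lift ord0 k) (tagged (a k)))).

Definition plonka_band s (i : 'I_(ar s).+1) (x y : {p : I & A p}) : {p : I & A p} :=
  existT A (tag x `|` tag y) (xi (tag x) (tag x `|` tag y) (leUl (tag x) (tag y)) s i (tagged x)).
End Plonka.

(* Main.v *)
Require Import Defs.
From mathcomp Require Import all_boot all_order.
From Stdlib Require Import Eqdep_dec FunctionalExtensionality.
Import Order.TTheory.
Local Open Scope order_scope.

Section Helpers.
Variables (d : Order.disp_t) (I : joinSemilatticeType d).

Lemma join_idx_lub n (ps : 'I_n -> I) b u :
  (forall e : n = 0, b e <= u) -> (forall i, ps i <= u) -> join_idx d I n ps b <= u.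
Proof.
case: n ps b => [|m] ps b hb hps; first exact: hb.
rewrite /join_idx.
elim: (enum 'I_m.+1) => [|j s IH] /=; first exact: hps.
by rewrite leUx hps IH.
Qed.

Variables (Sym : Type) (ar : Sym -> nat) (A : I -> Type).
Variable op : forall p s, ('I_(ar s) -> A p) -> A p.
Variable xi : forall p q, p <= q -> forall s, 'I_(ar s).+1 -> A p -> A q.

Lemma exT_eq p r r' (e : r = r') (H : p <= r) (H' : p <= r') s i a :
  existT A r (xi p r H s i a) = existT A r' (xi p r' H' s i a).
Proof. by subst r'; rewrite (bool_irrelevance H H'). Qed.

Lemma existT_inj r (x y : A r) : existT A r x = existT A r y -> x = y.
Proof.
apply: inj_pair2_eq_dec => u v; case: (eqVneq u v) => [->|ne]; [by left|right].
by move=> E; rewrite E eqxx in ne.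
Qed.

Lemma opE s r1 r2 (e : r1 = r2) (F1 : 'I_(ar s) -> A r1) (F2 : 'I_(ar s) -> A r2) :
  (forall k, existT A r1 (F1 k) = existT A r2 (F2 k)) ->
  existT A r1 (op r1 s F1) = existT A r2 (op r2 s F2).
Proof.
subst r2 => H; have -> // : F1 = F2.
by apply: functional_extensionality => k; apply: existT_inj.
Qed.
End Helpers.

Theorem theorem4p6 (d : Order.disp_t) (I : joinSemilatticeType d)
  (Sym : Type) (ar : Sym -> nat)
  (A : I -> Type) (op : forall p s, ('I_(ar s) -> A p) -> A p)
  (xi : forall p q, p <= q -> forall s, 'I_(ar s).+1 -> A p -> A q)
  (hbot : forall s, ar s = 0 -> {b : I | forall p, b <= p})
  (* each xi_pq is a metamorphism A_p => A_q *)
  (xi_meta : forall p q (h : p <= q) s (a : 'I_(ar s) -> A p),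
      xi p q h s ord0 (op p s a) = op q s (fun k => xi p q h s (lift ord0 k) (a k)))
  (* xi_pp is the identity *)
  (xi_id : forall p (h : p <= p) s i (a : A p), xi p p h s i a = a)
  (* xi_qr o xi_pq = xi_pr *)
  (xi_comp : forall p q r (hpq : p <= q) (hqr : q <= r) (hpr : p <= r) s i (a : A p),
      xi q r hqr s i (xi p q hpq s i a) = xi p r hpr s i a) :
  let band := plonka_band d I Sym ar A xi in
  [/\ partition_system Sym ar {p : I & A p} (plonka_op d I Sym ar A op xi hbot) band,
      (forall s i (x y : {p : I & A p}), bequiv _ (band s i) x y <-> tag x = tag y),
      (forall s i (x y : {p : I & A p}), bprec _ (band s i) x y <-> tag x <= tag y) &
      (forall s i p q (h : p <= q) (a : A p) (b : A q),
          band s i (existT A p a) (existT A q b) = existT A q (xi p q h s i a))].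
Proof.
move=> band.
have prec : forall s i (x y : {p : I & A p}), bprec _ (band s i) x y <-> tag x <= tag y.
  move=> s i [p a] [q b]; rewrite /bprec /band /plonka_band /=; split.
    by move/(congr1 tag) => /= <-; exact: leUr.
  move=> h; have hq : q <= q by [].
  transitivity (existT A q (xi q q hq s i b)); last by rewrite xi_id.
  exact: exT_eq (join_l h) _ _ _ _ _.
have equiv : forall s i (x y : {p : I & A p}), bequiv _ (band s i) x y <-> tag x = tag y.
  move=> s i x y; rewrite /bequiv; split.
    by move=> [/prec h1 /prec h2]; apply: le_anti; rewrite h1 h2.
  by move=> e; split; apply/prec; rewrite e.
split => //; last first.
  move=> s i p q h a b; rewrite /band /plonka_band /=; exact: exT_eq (join_r h) _ _ _ _ _.
split.
- move=> s i; split.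
  + move=> [p a]; rewrite /band /plonka_band /=.
    have hp : p <= p by [].
    transitivity (existT A p (xi p p hp s i a)); last by rewrite xi_id.
    exact: exT_eq (joinxx p) _ _ _ _ _.
  + move=> [p a] [q b] [r c]; rewrite /band /plonka_band /=.
    rewrite (xi_comp _ _ _ _ _ (le_trans (leUl p q) (leUl _ r))).
    exact: exT_eq (joinA p q r) _ _ _ _ _.
  + move=> [p a] [q b] [r c]; rewrite /band /plonka_band /=.
    exact: exT_eq (congr1 _ (joinC q r)) _ _ _ _ _.
- move=> s i t j x y; split=> /prec h; exact/prec.
- move=> s a [q b] ar0; rewrite /band /plonka_band /plonka_op /=.
  set J := join_idx d I (ar s) (fun k => tag (a k)) (fun e => sval (hbot s e)).
  set J' := join_idx d I (ar s) (fun k => tag (a k) `|` q) (fun e => sval (hbot s e)).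
  have eJ : J `|` q = J'.
    apply: le_anti; apply/andP; split.
      rewrite leUx; apply/andP; split.
        apply: join_idx_lub => [e|k]; first by rewrite e in ar0.
        apply: le_trans (join_idx_ub _ _ _ _ _ k); exact: leUl.
      apply: le_trans (join_idx_ub _ _ _ _ _ (Ordinal ar0)); exact: leUr.
    apply: join_idx_lub => [e|k]; first by rewrite e in ar0.
    by apply: leU2 => //; apply: join_idx_ub.
  rewrite xi_meta; apply: (@opE _ _ _ _ _ _ _ _ _ eJ) => k.
  rewrite (xi_comp _ _ _ _ _ (le_trans
     (join_idx_ub d I (ar s) (fun k => tag (a k)) (fun e => sval (hbot s e)) k) (leUl _ q))).
  rewrite (xi_comp _ _ _ _ _ (le_trans (leUl (tag (a k)) q)
     (join_idx_ub d I (ar s) (fun k => tag (a k) `|` q) (fun e => sval (hbot s e)) k))).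
  exact: exT_eq eJ _ _ _ _ _.
- move=> s a [q b]; rewrite /plonka_op.
  set J := join_idx d I (ar s) (fun k => tag (a k)) (fun e => sval (hbot s e)).
  set f := fun r (y : {p : I & A p}) => r `|` tag y.
  have fl_ge : forall l r, r <= foldl f r l.
    by elim=> [|y l IH] r //=; apply: le_trans (IH _); exact: leUl.
  have fl_mem : forall (l : seq 'I_(ar s)) r k, k \in l -> tag (a k) <= foldl f r (map a l).
    elim=> [|j l IH] r k //=; rewrite in_cons => /orP [/eqP ->|/IH H]; last exact: H.
    apply: le_trans (fl_ge _ _); exact: leUr.
  have fl_lub : forall (l : seq 'I_(ar s)) r u, r <= u -> (forall k, tag (a k) <= u) ->
      foldl f r (map a l) <= u.
    elim=> [|j l IH] r u hr hu /=; first exact: hr.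
    by apply: IH => //; rewrite leUx hr hu.
  have fl_band : forall l x, foldl (band s ord0) x l =
      existT A (foldl f (tag x) l) (xi (tag x) _ (fl_ge l (tag x)) s ord0 (tagged x)).
    elim=> [|y l IH] [p x] /=.
      have hp : p <= p by [].
      by rewrite xi_id.
    rewrite IH /band /plonka_band /= xi_comp; first exact: le_trans (leUl p (tag y)) (fl_ge _ _).
    by move=> H; apply: exT_eq.
  rewrite fl_band /band /plonka_band /=; apply: exT_eq.
  apply: le_anti; apply/andP; split.
    rewrite leUx fl_ge /=; apply: join_idx_lub => [e|k].
      by case: (hbot s e) => bt /= ->.
    by apply: fl_mem; rewrite mem_enum.
  apply: fl_lub; first exact: leUl.
  move=> k; apply: le_trans (leUr _ _); exact: join_idx_ub.
Qed.
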